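(* Let $\Omega\subset\mathbb{R}^N$ ($N\le 3$) be a smooth bounded domain whose principal Dirichlet eigenvalue $\Lambda_1$ of $-\Delta$ satisfies $\Lambda_1<1$, let $n\ge 3$ and $\mu_1\le\mu_2\le\dots\le\mu_n$ be real constants, and consider, for $\beta\in\mathbb{R}$, the system $$-\Delta u_j-u_j=\mu_ju_j^3+\beta\sum_{k\ne j}u_k^2u_j,\quad u_j>0 \text{ in }\Omega,\quad u_j=0\text{ on }\partial\Omega,\qquad j=1,\dots,n.$$ Define the interval (or union of intervals) $I$ by: $I=(-\infty,\bar\beta)$ in the focusing case; $I=(-\infty,\mu_1)\cup(\mu_n,\bar\beta)$ in the defocusing case; $I=(-\infty,\mu_1)$ in all mixed cases. Then for every $\beta\in I$ the system has a synchronized solution $\mathbf u(\beta)=(u_1,\dots,u_n)\in[H_0^1(\Omega)]^n$, and this synchronized solution is uniquely determined. These solutions form the synchronized solution branch $$\mathcal T_\omega=\{(\beta,\alpha_1(\beta)\omega,\dots,\alpha_n(\beta)\omega):\beta\in I\},\qquad \alpha_j(\beta)=\big((\beta-\mu_j)g(\beta)\big)^{-1/2}.$$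
   Context: $\omega\in H_0^1(\Omega)$ denotes the unique positive (and non-degenerate) solution of $-\Delta\omega-\omega=-\omega^3$. A solution $(u_1,\dots,u_n)$ is called synchronized if $u_j=\alpha_j\omega$ with constants $\alpha_j>0$ for all $j$. Let $g(\beta)=1+\beta\sum_{j=1}^n\frac{1}{\mu_j-\beta}$ for $\beta\notin\{\mu_1,\dots,\mu_n\}$. The system is called focusing if $0<\mu_1\le\dots\le\mu_n$, defocusing if $\mu_1\le\dots\le\mu_n<0$, and mixed otherwise. In the focusing case $\bar\beta$ denotes the unique zero of $g$ in $(-\infty,0)$; in the defocusing case $\bar\beta$ denotes the unique zero of $g$ in $(\mu_n,\infty)$. *)

(* Defs.v *)
From HB Require Import structures.
From mathcomp Require Import all_boot all_order all_algebra.
From mathcomp Require Import all_classical all_reals all_analysis.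
Set Implicit Arguments. Unset Strict Implicit. Unset Printing Implicit Defensive.
Import Order.TTheory GRing.Theory Num.Theory.
Import numFieldNormedType.Exports.
Local Open Scope classical_set_scope.
Local Open Scope ring_scope.

Section Defs.
Variable R : realType.

Definition basis_vec (N : nat) (i : 'I_N) : 'rV[R]_N := delta_mx 0 i.

Definition laplacian (N : nat) (u : 'rV[R]_N -> R) (x : 'rV[R]_N) : R :=
  \sum_(i < N) 'D_(basis_vec i) ('D_(basis_vec i) u) x.

Definition twice_diff_on (N : nat) (Om : set 'rV[R]_N) (u : 'rV[R]_N -> R) :=
  forall x, Om x ->
    differentiable u x /\
    forall i : 'I_N, differentiable ('D_(basis_vec i) u) x.

Definition dirichlet0 (N : nat) (Om : set 'rV[R]_N) (u : 'rV[R]_N -> R) :=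
  {within closure Om, continuous u} /\
  forall x, closure Om x -> ~ Om x -> u x = 0.

Definition is_solution (N n : nat) (Om : set 'rV[R]_N) (mu : 'I_n -> R) (beta : R)
    (u : 'I_n -> 'rV[R]_N -> R) : Prop :=
  forall j : 'I_n,
    twice_diff_on Om (u j) /\ dirichlet0 Om (u j) /\
    (forall x, Om x -> 0 < u j x) /\
    (forall x, Om x ->
       - laplacian (u j) x - u j x
       = mu j * u j x ^+ 3 + beta * \sum_(k < n | k != j) u k x ^+ 2 * u j x).

Definition synchronized (N n : nat) (omega : 'rV[R]_N -> R) (u : 'I_n -> 'rV[R]_N -> R) :=
  exists alpha : 'I_n -> R, (forall j, 0 < alpha j) /\ (forall j, u j = (fun x => alpha j * omega x)).

Definition gfun (n : nat) (mu : 'I_n -> R) (beta : R) : R :=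
  1 + beta * \sum_(j < n) (mu j - beta)^-1.

Definition focusing (n : nat) (mu : 'I_n -> R) := forall j, 0 < mu j.
Definition defocusing (n : nat) (mu : 'I_n -> R) := forall j, mu j < 0.

Definition betabar_foc (n : nat) (mu : 'I_n -> R) : R :=
  xget 0 [set b : R | b < 0 /\ gfun mu b = 0].
Definition betabar_defoc (n : nat) (mu : 'I_n -> R) (mun : R) : R :=
  xget 0 [set b : R | mun < b /\ gfun mu b = 0].

Definition mu_first (n : nat) (mu : 'I_n -> R) : R := head 0 [seq mu i | i <- enum 'I_n].
Definition mu_last (n : nat) (mu : 'I_n -> R) : R := last 0 [seq mu i | i <- enum 'I_n].

Definition in_I (n : nat) (mu : 'I_n -> R) (beta : R) : Prop :=
  let mu1 := mu_first mu in let mun := mu_last mu in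
  if `[< focusing mu >] then is_true (beta < betabar_foc mu)
  else if `[< defocusing mu >] then beta < mu1 \/ (mun < beta /\ beta < betabar_defoc mu mun)
  else beta < mu1.

Definition alpha_branch (n : nat) (mu : 'I_n -> R) (beta : R) (j : 'I_n) : R :=
  ((beta - mu j) * gfun mu beta) `^ (- 2^-1).

End Defs.

(* Main.v *)
Require Import Defs.
From HB Require Import structures.
From mathcomp Require Import all_boot all_order all_algebra.
From mathcomp Require Import all_classical all_reals all_analysis.
From mathcomp Require Import ring lra.
Import Order.TTheory GRing.Theory Num.Theory.
Import numFieldNormedType.Exports.
Local Open Scope classical_set_scope.
Local Open Scope ring_scope.

Lemma deriveMl_all (R : realType) (V : normedModType R) (f : V -> R) (c : R) v x :
  'D_v (fun y => c * f y) x = c * 'D_v f x.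
Proof.
have [df|ndf] := pselect (derivable f x v).
  by rewrite -deriveMl.
have [->|c0] := eqVneq c 0.
  rewrite mul0r (_ : (fun y => 0 * f y) = cst 0); last by apply/funext=> y; rewrite mul0r.
  by rewrite derive_cst.
have ndcf : ~ derivable (fun y => c * f y) x v.
  move=> dcf; apply: ndf.
  have -> : f = (fun y => c^-1 * (c * f y)) by apply/funext=> y; rewrite mulrA mulVf // mul1r.
  exact: derivableM.
rewrite /derive (dvgP ndf) (dvgP ndcf) /=; exact: (esym (mulr0 c)).
Qed.

Section Alg.
Variables (R : realType) (n : nat) (mu : 'I_n -> R) (beta : R).
Hypothesis hb : forall j, mu j - beta != 0.
Hypothesis hg : gfun mu beta != 0.
Let g := gfun mu beta.
Let A k := ((beta - mu k) * g)^-1.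

Lemma sum_neq (F : 'I_n -> R) j : \sum_(k < n | k != j) F k = (\sum_k F k) - F j.
Proof. by rewrite [in RHS](bigD1 j) //= addrC addrK. Qed.

Lemma key_eq j : mu j * A j + beta * \sum_(k < n | k != j) A k = -1.
Proof.
rewrite sum_neq.
have bS : beta * \sum_k A k = - g^-1 * (g - 1).
  have -> : \sum_k A k = - g^-1 * \sum_k (mu k - beta)^-1.
    rewrite mulr_sumr; apply: eq_bigr => k _; rewrite /A.
    have := hb k; have := hg; rewrite -/g => h1 h2; field.
    by rewrite h2 h1 -opprB oppr_eq0 h2.
  have gE : g = 1 + beta * \sum_k (mu k - beta)^-1 by [].
  rewrite [X in _ * (X - 1)]gE; ring.
have := hb j; have := hg; rewrite -/g => h1 h2.
rewrite mulrBr bS /A; field.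
by rewrite h1 /= -opprB oppr_eq0 h2.
Qed.

Lemma uniq_eq (a : 'I_n -> R) :
  (forall j, mu j * a j + beta * \sum_(k < n | k != j) a k = -1) -> a = A.
Proof.
move=> ha.
pose d k := a k - A k.
have hd : forall j, (mu j - beta) * d j + beta * \sum_k d k = 0.
  move=> j; have := ha j; have := key_eq j.
  rewrite !sum_neq /d sumrB => e1 e2.
  transitivity ((mu j * a j + beta * ((\sum_i a i) - a j)) - (mu j * A j + beta * ((\sum_i A i) - A j))).
    ring.
  by rewrite e1 e2 subrr.
have hdj : forall j, d j = - beta * (\sum_k d k) * (mu j - beta)^-1.
  move=> j; have := hd j; have := hb j => h1 h2.
  apply: (mulfI h1); rewrite mulrCA (divff h1) mulr1.
  by apply/eqP; rewrite -subr_eq0 mulNr opprK h2.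
have D0 : \sum_k d k = 0.
  have : (\sum_k d k) * g = 0.
    rewrite /g /gfun mulrDr mulr1.
    have {1}-> : \sum_k d k = \sum_k (- beta * (\sum_k d k) * (mu k - beta)^-1).
      by apply: eq_bigr => k _; rewrite -hdj.
    rewrite -mulr_sumr; ring.
  by move/eqP; rewrite mulf_eq0 (negbTE hg) orbF => /eqP.
apply/funext => j; apply/eqP; rewrite -subr_eq0; apply/eqP.
by rewrite -/(d j) hdj D0 !(mulr0, mul0r).
Qed.
End Alg.

Section Pos.
Variables (R : realType) (n : nat) (mu : 'I_n -> R).
Hypothesis hn : (3 <= n)%N.
Hypothesis hs : forall i j : 'I_n, (i <= j)%N -> mu i <= mu j.

Lemma gE b : gfun mu b = 1 + \sum_k b / (mu k - b).
Proof. by rewrite /gfun mulr_sumr. Qed.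

Lemma term_diff (m b c : R) : m - b != 0 -> m - c != 0 ->
  c / (m - c) - b / (m - b) = m * (c - b) / ((m - c) * (m - b)).
Proof. by move=> h1 h2; field; rewrite h1 h2. Qed.

Let j0 : 'I_n := Ordinal (leq_trans (isT : (0 < 3)%N) hn).
Let jf := nth j0 (enum 'I_n) 0.
Let jl := nth j0 (enum 'I_n) n.-1.

Lemma jf_val : val jf = 0%N.
Proof. by rewrite /jf; apply: nth_enum_ord; rewrite (leq_trans _ hn). Qed.
Lemma jl_val : val jl = n.-1.
Proof. by rewrite /jl; apply: nth_enum_ord; rewrite prednK // (leq_trans _ hn). Qed.

Lemma mu_firstE : mu_first mu = mu jf.
Proof. by rewrite /mu_first -nth0 (nth_map j0) // size_enum_ord (leq_trans _ hn). Qed.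
Lemma mu_lastE : mu_last mu = mu jl.
Proof.
rewrite /mu_last -nth_last (nth_map j0) size_map size_enum_ord //.
by rewrite prednK // (leq_trans _ hn).
Qed.
Lemma first_le j : mu jf <= mu j.
Proof. by apply: hs; rewrite jf_val. Qed.
Lemma last_ge j : mu j <= mu jl.
Proof. by apply: hs; rewrite jl_val -ltnS prednK // (leq_trans _ hn). Qed.
Lemma jfl : jf != jl.
Proof. by rewrite -(inj_eq val_inj) jf_val jl_val; case: n hn => [|[|[|]]]. Qed.

Lemma n3 : 3 <= n%:R :> R.
Proof. by rewrite (ler_nat R 3 n). Qed.

Lemma cont_g (a b : R) : (forall x k, a <= x <= b -> mu k - x != 0) ->
  {within `[a, b], continuous (gfun mu)}.
Proof.
move=> hx; apply: continuous_in_subspaceT => x /set_mem /= xab.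
have hx' k := hx x k xab.
rewrite /gfun; apply: cvgD; first exact: cvg_cst.
apply: cvgM; first exact: cvg_id.
have : forall s : seq 'I_n, {for x, continuous (fun b => \sum_(k <- s) (mu k - b)^-1)}.
  elim=> [|k s IH].
    under [X in {for x, continuous X}]funext => y do rewrite big_nil.
    exact: cst_continuous.
  under [X in {for x, continuous X}]funext => y do rewrite big_cons.
  apply: cvgD => //; apply: cvgV => //.
  apply: cvgB; [exact: cvg_cst | exact: cvg_id].
by move=> /(_ (index_enum _)).
Qed.


Lemma has_all : has (fun _ : 'I_n => true) (index_enum 'I_n).
Proof. by apply/hasP; exists j0; rewrite ?mem_index_enum. Qed.

Lemma neg_case beta : beta < mu jf -> mu jf <= 0 -> gfun mu beta < 0.
Proof.
move=> hb hf.
have hk k : 0 < mu k - beta by have := first_le k; lra.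
have tneg k : beta / (mu k - beta) < 0.
  by rewrite pmulr_llt0 ?invr_gt0 //; lra.
have tf : beta / (mu jf - beta) <= -1.
  by rewrite ler_pdivrMr //; lra.
rewrite gE (bigD1 jf) //= (bigD1 jl) /=; last by rewrite eq_sym jfl.
have : \sum_(i < n | (i != jf) && (i != jl)) beta / (mu i - beta) <= 0.
  by apply: sumr_le0 => i _; apply: ltW.
have := tneg jl; lra.
Qed.

Lemma sum_half (F : 'I_n -> R) : (forall k, F k <= - 2^-1) -> 1 + \sum_k F k < 0.
Proof.
move=> hF.
have : \sum_k F k <= \sum_(k < n) (- 2^-1 : R) by apply: ler_sum => k _; exact: hF.
rewrite sumr_const card_ord -mulr_natl.
have := n3; lra.
Qed.

Lemma foc_case beta : focusing mu -> beta < betabar_foc mu -> beta < 0 /\ gfun mu beta < 0.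
Proof.
move=> foc hb.
have hl := foc jl.
pose b0 := - mu jl.
have gb0 : gfun mu b0 < 0.
  rewrite gE; apply: sum_half => k.
  have := last_ge k; have := foc k => h1 h2.
  rewrite ler_pdivrMr /b0; lra.
have g0 : gfun mu 0 = 1 by rewrite /gfun mul0r addr0.
have [c] : exists2 c, c \in `[b0, 0] & gfun mu c = 0.
  apply: IVT; first by rewrite /b0; lra.
    apply: cont_g => x k /andP [_ x0]; have := foc k; lra.
  rewrite g0 ge_min le_max; apply/andP; split; apply/orP; [left|right]; lra.
rewrite in_itv /= => /andP [c1 c2] gc.
have cneg : c < 0.
  rewrite lt_neqAle c2 andbT; apply/eqP => c0; move: gc; rewrite c0 g0; lra.
have [bbneg gbb] : betabar_foc mu < 0 /\ gfun mu (betabar_foc mu) = 0.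
  exact: (xgetPex 0 (ex_intro (fun b => b < 0 /\ gfun mu b = 0) c (conj cneg gc))).
split; first lra.
rewrite -gbb !gE ltrD2l; apply: ltr_sum; first exact: has_all.
move=> k _; have := foc k => hk.
rewrite -subr_gt0 term_diff; try (apply/eqP; lra).
apply: divr_gt0; apply: mulr_gt0; lra.
Qed.


Lemma defoc_case beta : defocusing mu -> mu jl < beta -> beta < betabar_defoc mu (mu_last mu) ->
  0 < gfun mu beta.
Proof.
move=> dfoc hl hb.
have hf := dfoc jf.
pose b1 := - mu jf.
have gb1 : gfun mu b1 < 0.
  rewrite gE; apply: sum_half => k.
  have := first_le k; have := dfoc k => h1 h2.
  rewrite ler_ndivrMr /b1; lra.
have g0 : gfun mu 0 = 1 by rewrite /gfun mul0r addr0.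
have [c] : exists2 c, c \in `[0, b1] & gfun mu c = 0.
  apply: IVT; first by rewrite /b1; lra.
    apply: cont_g => x k /andP [x0 _]; have := dfoc k; lra.
  rewrite g0 ge_min le_max; apply/andP; split; apply/orP; [right|left]; lra.
rewrite in_itv /= => /andP [c1 c2] gc.
have cpos : mu jl < c.
  have : 0 < c.
    rewrite lt_neqAle c1 andbT; apply/eqP => c0; move: gc; rewrite -c0 g0; lra.
  have := dfoc jl; lra.
move: hb; rewrite mu_lastE => hb.
have [bbg gbb] : mu jl < betabar_defoc mu (mu jl) /\ gfun mu (betabar_defoc mu (mu jl)) = 0.
  exact: (xgetPex 0 (ex_intro (fun b => mu jl < b /\ gfun mu b = 0) c (conj cpos gc))).
rewrite -gbb !gE ltrD2l; apply: ltr_sum; first exact: has_all.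
move=> k _; have := dfoc k => hk; have := last_ge k => hk2.
rewrite -subr_gt0 term_diff; try (apply/eqP; lra).
apply: divr_gt0; nra.
Qed.

Lemma pos_lemma beta : in_I mu beta -> forall j, 0 < (beta - mu j) * gfun mu beta.
Proof.
rewrite /in_I /= mu_firstE; case: asboolP => [foc|nfoc].
  move=> hb j; have [h1 h2] := foc_case beta foc hb; have := foc j; nra.
case: asboolP => [dfoc|ndfoc].
  move=> [hb|[hb1 hb2]] j.
    have := neg_case beta hb (ltW (dfoc jf)); have := first_le j; nra.
  move: hb1; rewrite mu_lastE => hb1.
  have := defoc_case beta dfoc hb1 hb2; have := last_ge j; nra.
move=> hb j.
have hf : mu jf <= 0.
  rewrite leNgt; apply/negP => h; apply: nfoc => k; exact: lt_le_trans h (first_le k).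
have := neg_case beta hb hf; have := first_le j; nra.
Qed.

End Pos.

Section Main.
Variables (R : realType) (N : nat).

Lemma D_scale (c : R) (f : 'rV[R]_N -> R) v :
  'D_v (fun y => c * f y) = (fun y => c * 'D_v f y).
Proof. by apply/funext => y; rewrite deriveMl_all. Qed.

Lemma lap_scale (c : R) (f : 'rV[R]_N -> R) x :
  laplacian (fun y => c * f y) x = c * laplacian f x.
Proof.
rewrite /laplacian mulr_sumr; apply: eq_bigr => i _.
by rewrite D_scale deriveMl_all.
Qed.

Lemma rhs_form n (mu : 'I_n -> R) beta (a : 'I_n -> R) (w : R) j :
  mu j * (a j * w) ^+ 3 + beta * \sum_(k < n | k != j) (a k * w) ^+ 2 * (a j * w)
  = (mu j * a j ^+ 2 + beta * \sum_(k < n | k != j) a k ^+ 2) * (a j * w ^+ 3).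
Proof.
rewrite mulrDl; congr (_ + _); first ring.
rewrite -mulrA mulr_suml; congr (beta * _); apply: eq_bigr => k _; ring.
Qed.

End Main.

Theorem theorem1p1 (R : realType) (N : nat) (Om : set 'rV[R]_N)
  (omega : 'rV[R]_N -> R) (n : nat) (mu : 'I_n -> R) :
  (N <= 3)%N ->
  open Om -> bounded_set Om -> Om !=set0 -> connected Om ->
  (* omega: positive solution of -Δω - ω = -ω^3 in Om, ω = 0 on ∂Om *)
  twice_diff_on Om omega -> dirichlet0 Om omega ->
  (forall x, Om x -> 0 < omega x) ->
  (forall x, Om x -> - laplacian omega x - omega x = - omega x ^+ 3) ->
  (3 <= n)%N ->
  (forall i j : 'I_n, (i <= j)%N -> mu i <= mu j) ->
  forall beta : R, in_I mu beta ->
    (forall j, 0 < (beta - mu j) * gfun mu beta) /\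
    is_solution Om mu beta (fun j x => alpha_branch mu beta j * omega x) /\
    (forall u : 'I_n -> 'rV[R]_N -> R,
       synchronized omega u -> is_solution Om mu beta u ->
       u = (fun j x => alpha_branch mu beta j * omega x)).
Proof.
move=> _ oOm _ [x0 Omx0] _ wdiff [wc wb] wpos weq hn hs beta hI.
have pos := @pos_lemma R n mu hn hs beta hI.
have hb j : mu j - beta != 0.
  by apply/eqP => e; have := pos j; rewrite -opprB e oppr0 mul0r ltxx.
have j0 : 'I_n := Ordinal (leq_trans (isT : (0 < 3)%N) hn).
have hg : gfun mu beta != 0.
  by apply/eqP => e; have := pos j0; rewrite e mulr0 ltxx.
pose A k := ((beta - mu k) * gfun mu beta)^-1.
have apos j : 0 < alpha_branch mu beta j.
  by rewrite /alpha_branch powR_gt0.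
have asq j : alpha_branch mu beta j ^+ 2 = A j.
  rewrite /alpha_branch powRN powR12_sqrt; last exact: ltW.
  by rewrite exprVn sqr_sqrtr // ltW.
have eqform (a : 'I_n -> R) j x : Om x ->
   (- laplacian (fun y => a j * omega y) x - a j * omega x
    = mu j * (a j * omega x) ^+ 3 + beta * \sum_(k < n | k != j) (a k * omega x) ^+ 2 * (a j * omega x))
   <-> (a j * (- omega x ^+ 3) = (mu j * a j ^+ 2 + beta * \sum_(k < n | k != j) a k ^+ 2) * (a j * omega x ^+ 3)).
  move=> Omx; rewrite rhs_form lap_scale -(weq x Omx).
  have -> : - (a j * laplacian omega x) - a j * omega x = a j * (- laplacian omega x - omega x) by ring.
  by [].
split; first exact: pos.
split.
  move=> j /=; split; [|split; [|split]].
  - move=> x Omx; have [d1 d2] := wdiff x Omx; split.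
      by apply: differentiableM => //; exact: differentiable_cst.
    move=> i; rewrite D_scale.
    by apply: differentiableM => //; exact: differentiable_cst.
  - split.
      by move=> x; apply: cvgM; [exact: cvg_cst | exact: wc].
    by move=> x cx nx; rewrite wb // mulr0.
  - by move=> x Omx; apply: mulr_gt0 => //; exact: wpos.
  - move=> x Omx; apply/(eqform _ j x Omx).
    rewrite !asq.
    under eq_bigr => k _ do rewrite asq.
    rewrite /A (@key_eq R n mu beta hb hg j).
    by ring.
move=> u [a [ap ue]] sol.
have uE : u = (fun j x => a j * omega x) by apply/funext => j; exact: ue j.
rewrite uE in sol *.
suff -> : a = alpha_branch mu beta by [].
have sys j : mu j * (a j ^+ 2) + beta * \sum_(k < n | k != j) a k ^+ 2 = -1.
  have [_ [_ [_ e]]] := sol j.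
  move: (e x0 Omx0) => /(eqform a j x0 Omx0) h.
  have nz : a j * omega x0 ^+ 3 != 0.
    by rewrite mulf_neq0 ?expf_neq0 // gt_eqF // ?ap ?wpos.
  apply: (mulIf nz); rewrite -h; ring.
have hA := @uniq_eq R n mu beta hb hg (fun k => a k ^+ 2) sys.
apply/funext => k; apply/eqP; rewrite -(@eqrXn2 _ 2) ?ltW //.
by rewrite asq /A -(congr1 (fun f => f k) hA).
Qed.
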